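(* Let $X$ be a Hausdorff space all of whose finite powers are Lindel\''of. If for every positive integer $k$ the polarized partition relation $\left(\begin{array}{c}\Omega\\ \Omega\end{array}\right)\longrightarrow\left[\begin{array}{c}\Omega\\ \Omega\end{array}\right]^{1,1}_{k/<3}$ holds for $X$, then $X$ has the property $\textsf{Split}(\Omega,\Omega)$.
   Context: $\Omega$: the $\omega$-covers of $X$ (open covers $\mathcal{U}$ with $X\notin\mathcal{U}$ such that each finite subset of $X$ lies in some member). The relation $\left(\begin{array}{c}\Omega\\ \Omega\end{array}\right)\longrightarrow\left[\begin{array}{c}\Omega\\ \Omega\end{array}\right]^{1,1}_{k/<3}$ means: for all $\mathcal{U}_1,\mathcal{U}_2\in\Omega$ and every $f:\mathcal{U}_1\times\mathcal{U}_2\to\{1,\dots,k\}$ there are $\mathcal{B}_1\subseteq\mathcal{U}_1$ and $\mathcal{B}_2\subseteq\mathcal{U}_2$ with $\mathcal{B}_1,\mathcal{B}_2\in\Omega$ such that $f$ takes fewer than $3$ distinct values on $\mathcal{B}_1\times\mathcal{B}_2$. $\textsf{Split}(\Omega,\Omega)$: for every $\omega$-cover $\mathcal{U}$ there are $\omega$-covers $\mathcal{B}_1,\mathcal{B}_2$ with $\mathcal{B}_1\cap\mathcal{B}_2=\emptyset$ and $\mathcal{B}_1\cup\mathcal{B}_2=\mathcal{U}$. *)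

(* Defs.v *)
From HB Require Import structures.
From mathcomp Require Import all_boot all_order all_algebra.
From mathcomp Require Import all_classical all_reals all_analysis.
Set Implicit Arguments. Unset Strict Implicit. Unset Printing Implicit Defensive.
Local Open Scope classical_set_scope.

Definition lindelof (T : topologicalType) : Prop :=
  forall C : set (set T), (forall A, C A -> open A) ->
    setT `<=` \bigcup_(A in C) A ->
    exists D : set (set T), [/\ D `<=` C, countable D &
                               setT `<=` \bigcup_(A in D) A].

Definition power (X : topologicalType) (n : nat) : topologicalType :=
  {ptws 'I_n -> X}.

Definition omega_cover (X : topologicalType) (U : set (set X)) : Prop :=
  [/\ forall A, U A -> open A,
      ~ U setT &
      forall F : set X, finite_set F -> exists2 A, U A & F `<=` A].

Definition polarized_omega (X : topologicalType) (k : nat) : Prop :=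
  forall (U1 U2 : set (set X)), omega_cover U1 -> omega_cover U2 ->
  forall f : set X -> set X -> 'I_k,
  exists B1 B2 : set (set X),
    [/\ B1 `<=` U1, B2 `<=` U2, omega_cover B1, omega_cover B2 &
        exists S : {set 'I_k}, (#|S| < 3)%N /\
          (forall a b, B1 a -> B2 b -> f a b \in S)].

Definition split_omega (X : topologicalType) : Prop :=
  forall U : set (set X), omega_cover U ->
  exists B1 B2 : set (set X),
    [/\ omega_cover B1, omega_cover B2, B1 `&` B2 = set0 & B1 `|` B2 = U].

(* Main.v *)
Require Import Defs.
From mathcomp Require Import all_boot all_order all_algebra.
From mathcomp Require Import all_classical all_reals all_analysis.
Set Implicit Arguments. Unset Strict Implicit. Unset Printing Implicit Defensive.
Local Open Scope classical_set_scope.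

Section S.
Variable X : topologicalType.

Definition tsel (a b : set X) : set X := xget set0 [set a; b].

Lemma tselC a b : tsel a b = tsel b a.
Proof. by rewrite /tsel setUC. Qed.

Lemma tselP a b : tsel a b = a \/ tsel a b = b.
Proof.
have : [set a; b] (tsel a b) by apply: (@xgetI _ set0 _ a); left.
by case=> ->; [left|right].
Qed.

Definition col (a b : set X) : 'I_3 :=
  if pselect (a = b) then @Ordinal 3 0 isT
  else if pselect (tsel a b = a) then @Ordinal 3 1 isT else @Ordinal 3 2 isT.

Lemma col0 a : col a a = @Ordinal 3 0 isT.
Proof. by rewrite /col; case: (pselect (a = a)). Qed.
Lemma col1 a b : a <> b -> tsel a b = a -> col a b = @Ordinal 3 1 isT.
Proof. by move=> ab t; rewrite /col; case: (pselect (a = b)) => // nab; case: (pselect (tsel a b = a)). Qed.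
Lemma col2 a b : a <> b -> tsel a b <> a -> col a b = @Ordinal 3 2 isT.
Proof. by move=> ab t; rewrite /col; case: (pselect (a = b)) => // nab; case: (pselect (tsel a b = a)). Qed.

End S.

Theorem theorem9p4 (X : topologicalType) :
  hausdorff_space X ->
  (forall n : nat, (0 < n)%N -> lindelof (power X n)) ->
  (forall k : nat, (0 < k)%N -> polarized_omega X k) ->
  split_omega X.
Proof.
move=> _ _ Hp U oU.
apply: contrapT => nsplit.
have key : forall B, B `<=` U -> omega_cover B ->
    exists F : set X, finite_set F /\ forall A, U A -> F `<=` A -> B A.
  move=> B BU oB.
  apply: contrapT => nF.
  apply: nsplit; exists B, (U `\` B); split => //.
  - case: oU => oUo nUT oUF; split.
    + by move=> A [UA _]; exact: oUo.
    + by case.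
    move=> F fF; apply: contrapT => nA.
    apply: nF; exists F; split => // A UA FA.
    apply: contrapT => nBA; apply: nA; by exists A.
  - by rewrite setDIK.
  - apply/seteqP; split => A.
      by case => [/BU|[]].
    by move=> UA; case: (pselect (B A)) => ?; [left|right].
have [B1 [B2 [B1U B2U oB1 oB2 [S [cS HS]]]]] :=
  Hp 3 isT U U oU oU (@col X).
have [F1 [fF1 H1]] := key _ B1U oB1.
have [F2 [fF2 H2]] := key _ B2U oB2.
case: (oU) => _ nUT oUF.
have fF12 : finite_set (F1 `|` F2) by rewrite finite_setU.
have [c Uc Fc] := oUF _ fF12.
have [x nx] : exists x, ~ c x.
  apply: contrapT => nx; apply: nUT.
  suff -> : setT = c by [].
  apply/seteqP; split => // y _; apply: contrapT => ny; apply: nx; by exists y.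
have fF3 : finite_set (F1 `|` F2 `|` [set x]).
  by rewrite finite_setU; split => //; exact: finite_set1.
have [d Ud Fd] := oUF _ fF3.
have Hc1 : B1 c by apply: H1 => //; apply: subset_trans Fc; exact: subsetUl.
have Hc2 : B2 c by apply: H2 => //; apply: subset_trans Fc; exact: subsetUr.
have Hd1 : B1 d by apply: H1 => //; move=> y Fy; apply: Fd; left; left.
have Hd2 : B2 d by apply: H2 => //; move=> y Fy; apply: Fd; left; right.
have cd : c <> d by move=> cd; apply: nx; rewrite cd; by apply: Fd; right.
have S0 := HS _ _ Hc1 Hc2.
have Scd := HS _ _ Hc1 Hd2.
have Sdc := HS _ _ Hd1 Hc2.
have allS : forall i : 'I_3, i \in S.
  have dc : d <> c by move=> e; apply: cd.
  move=> [[|[|[|i]]] Hi] //.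
  - by move: S0; rewrite col0; congr (_ \in S); apply: val_inj.
  - case: (tselP c d) => h.
      by move: Scd; rewrite col1 //; congr (_ \in S); apply: val_inj.
    have h' : tsel d c = d by rewrite tselC.
    by move: Sdc; rewrite col1 //; congr (_ \in S); apply: val_inj.
  - case: (tselP c d) => h.
      have h' : tsel d c <> d by rewrite tselC h.
      by move: Sdc; rewrite col2 //; congr (_ \in S); apply: val_inj.
    have h' : tsel c d <> c by rewrite h.
    by move: Scd; rewrite col2 //; congr (_ \in S); apply: val_inj.
have : (#|[set: 'I_3]%SET| <= #|S|)%N.
  by apply: subset_leq_card; apply/fintype.subsetP => i _; exact: allS.
by rewrite cardsT card_ord leqNgt cS.
Qed.
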